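(* Let $f$ be an orientation-preserving homeomorphism of the circle $\mathbb T=\mathbb R/\mathbb Z$ whose rotation number $\rho(f)$ is rational. Assume $f$ is not topologically conjugate to a rotation. Then ${\rm h_{pol}}(f)=1$.
   Context: The rotation number of $f$ is the class in $\mathbb T$ of $\lim_{n\to\infty}F^n(x)/n$ for a lift $F:\mathbb R\to\mathbb R$ of $f$ (independent of $x$). Polynomial entropy: with $d_n^f(x,y)=\max_{0\le k\le n-1}d(f^k(x),f^k(y))$ for the standard metric $d$ on $\mathbb T$ and $G_n^f(\varepsilon)$ the minimal number of $d_n^f$-balls of radius $\varepsilon$ covering $\mathbb T$, ${\rm h_{pol}}(f)=\lim_{\varepsilon\to0}\limsup_{n\to\infty}\frac{\log G_n^f(\varepsilon)}{\log n}$. *)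

(* Defs.v *)
(* The circle T = R/Z is handled through lifts:
   a point of T is represented by any real number (modulo 1), and a
   homeomorphism of T by a lift R -> R. *)
From HB Require Import structures.
From mathcomp Require Import all_boot all_order all_algebra.
From mathcomp Require Import all_classical all_reals all_analysis.
Set Implicit Arguments. Unset Strict Implicit. Unset Printing Implicit Defensive.
Import Order.TTheory GRing.Theory Num.Theory.
Import numFieldNormedType.Exports.
Local Open Scope classical_set_scope.
Local Open Scope ring_scope.

Section Circle.
Variable R : realType.

Definition dT (x y : R) : R :=
  let t := x - y in
  let fr := t - (Num.floor t)%:~R in
  Num.min fr (1 - fr).

Definition circle_homeo_lift (H : R -> R) : Prop :=
  continuous H /\ injective H /\
  ((forall x, H (x + 1) = H x + 1) \/ (forall x, H (x + 1) = H x - 1)).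

Definition orient_pres_homeo_lift (F : R -> R) : Prop :=
  continuous F /\ {homo F : x y / x < y} /\ (forall x, F (x + 1) = F x + 1).

Definition conj_to_rotation (F : R -> R) : Prop :=
  exists (H : R -> R) (alpha : R), circle_homeo_lift H /\
    forall x, exists k : int, H (F x) = H x + alpha + k%:~R.

Definition rational_rotation_number (F : R -> R) : Prop :=
  exists r : rat, (fun n : nat => iter n F 0 / n%:R) @ \oo --> (ratr r : R).

Definition dBowen (F : R -> R) (n : nat) (x y : R) : R :=
  \big[Num.max/0]_(k < n) dT (iter k F x) (iter k F y).

Definition covers (F : R -> R) (n : nat) (eps : R) (m : nat) : Prop :=
  exists c : 'I_m -> R, forall x : R, exists i : 'I_m, dBowen F n x (c i) < eps.

Definition Gcover (F : R -> R) (n : nat) (eps : R) : R :=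
  inf [set (m%:R : R) | m in covers F n eps].

Definition hpol_eps (F : R -> R) (eps : R) : \bar R :=
  limn_esup (fun n : nat => (ln (Gcover F n eps) / ln (n%:R))%:E).

End Circle.

(* Main.v *)
Require Import Defs.
From HB Require Import structures.
From mathcomp Require Import all_boot all_order all_algebra.
From mathcomp Require Import all_classical all_reals all_analysis.
From mathcomp Require Import ring lra zify.
Import Order.TTheory GRing.Theory Num.Theory.
Import numFieldNormedType.Exports.
Local Open Scope classical_set_scope.
Local Open Scope ring_scope.

Section DT.
Variable R : realType.
Implicit Types (x y z t : R).

Lemma eqle (a b : R) : a = b -> a <= b. Proof. by move=> ->. Qed.

Lemma dT_le x y (k : int) : dT x y <= `|x - y - k%:~R|.
Proof.
rewrite /dT; set t := x - y; set fl := Num.floor t.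
have /andP[h1 h2] := floor_itv t; rewrite -/fl in h1 h2.
rewrite intrD in h2.
case: (lerP k fl) => hk.
  have hk' : (k%:~R : R) <= fl%:~R by rewrite ler_int.
  rewrite ge_min; apply/orP; left.
  rewrite ger0_norm; lra.
have hk' : (fl%:~R : R) + 1 <= k%:~R by rewrite -[1]/(1%:~R) -intrD ler_int lezD1.
rewrite ge_min; apply/orP; right.
rewrite ltr0_norm; lra.
Qed.

Lemma dT_ex x y : exists k : int, dT x y = `|x - y - k%:~R|.
Proof.
rewrite /dT; set t := x - y; set fl := Num.floor t.
have /andP[h1 h2] := floor_itv t; rewrite -/fl in h1 h2.
rewrite intrD in h2.
rewrite /Order.min; case: ifPn => h.
  exists fl; rewrite ger0_norm //; lra.
exists (fl + 1); rewrite intrD ltr0_norm; lra.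
Qed.

Lemma dT_ge0 x y : 0 <= dT x y.
Proof. by have [k ->] := dT_ex x y. Qed.

Lemma dT_triangle x y z : dT x z <= dT x y + dT y z.
Proof.
have [k1 ->] := dT_ex x y; have [k2 ->] := dT_ex y z.
apply: le_trans (dT_le x z (k1 + k2)) _.
rewrite intrD; apply: le_trans (ler_normD _ _); apply: eqle; congr `|_|; ring.
Qed.

Lemma dT_sym x y : dT x y = dT y x.
Proof.
apply/le_anti/andP; split.
  have [k ->] := dT_ex y x; apply: le_trans (dT_le x y (- k)) _.
  by rewrite -normrN mulrNz; apply: eqle; congr `|_|; ring.
have [k ->] := dT_ex x y; apply: le_trans (dT_le y x (- k)) _.
by rewrite -normrN mulrNz; apply: eqle; congr `|_|; ring.
Qed.

Lemma dT_shift x y (k : int) : dT (x + k%:~R) y = dT x y.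
Proof.
apply/le_anti/andP; split.
  have [l ->] := dT_ex x y; apply: le_trans (dT_le _ y (k + l)) _.
  by rewrite intrD; apply: eqle; congr `|_|; ring.
have [l ->] := dT_ex (x + k%:~R) y; apply: le_trans (dT_le x y (l - k)) _.
by rewrite intrB; apply: eqle; congr `|_|; ring.
Qed.

Lemma dT_shiftr x y (k : int) : dT x (y + k%:~R) = dT x y.
Proof. by rewrite dT_sym dT_shift dT_sym. Qed.

Lemma dT_le_abs x y : dT x y <= `|x - y|.
Proof. by have := dT_le x y 0; rewrite subr0. Qed.

Lemma dT_lb x y e : 0 <= e -> 2 * e <= x - y <= 1 - 2 * e -> 2 * e <= dT x y.
Proof.
move=> he /andP[h1 h2]; have [k ->] := dT_ex x y.
case: (lerP k 0) => hk.
  have hk' : (k%:~R : R) <= 0 by rewrite (_ : 0 = 0%:~R) // ler_int.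
  rewrite ger0_norm; lra.
have hk' : (1 : R) <= k%:~R by rewrite (_ : 1 = 1%:~R) // ler_int.
rewrite ler0_norm; lra.
Qed.
End DT.
Arguments dT_le {R}. Arguments dT_ex {R}. Arguments dT_ge0 {R}. Arguments dT_triangle {R}.
Arguments dT_sym {R}. Arguments dT_shift {R}. Arguments dT_shiftr {R}. Arguments dT_le_abs {R}. Arguments dT_lb {R}.

Section Lift.
Variable R : realType.
Implicit Types (x y z w : R).
Notation lift := (@orient_pres_homeo_lift R).

Lemma lift_le G x y : lift G -> x <= y -> G x <= G y.
Proof.
move=> [_ [hm _]]; rewrite le_eqVlt => /orP[/eqP->//|h].
by apply/ltW/hm.
Qed.

Lemma lift_lt G x y : lift G -> x < y -> G x < G y.
Proof. by move=> [_ [hm _]]; apply: hm. Qed.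

Lemma lift_addn G x (n : nat) : lift G -> G (x + n%:R) = G x + n%:R.
Proof.
move=> [_ [_ h1]]; elim: n => [|n IH]; first by rewrite !addr0.
by rewrite -natr1 addrA h1 IH addrA.
Qed.

Lemma lift_addz G x (k : int) : lift G -> G (x + k%:~R) = G x + k%:~R.
Proof.
move=> hG; case: k => n.
  by rewrite -[(Posz n)%:~R]/(n%:R) lift_addn.
rewrite NegzE mulrNz.
have := lift_addn G (x - n.+1%:R) n.+1 hG.
by rewrite subrK => ->; rewrite addrK.
Qed.

Lemma lift_iter G n : lift G -> lift (iter n G).
Proof.
move=> hG; have [hc [hm hp]] := hG; elim: n => [|n [IHc [IHm IHp]]].
  by split=> //=; [move=> x; apply: cvg_id|split].

split; [|split].
- move=> x /=; apply: (@continuous_comp _ _ _ (iter n G) G); [exact: IHc|exact: hc].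
- by move=> x y hxy /=; apply: hm; apply: IHm.
- by move=> x /=; rewrite IHp hp.
Qed.

Lemma lift_surj G w : lift G -> exists x, G x = w.
Proof.
move=> hG; have [hc _] := hG.
set N : nat := (Num.trunc `|G w - w|).+1.
have hN : `|G w - w| < N%:R by apply: truncnS_gt.
have hN0 : 0 <= (N%:R : R) by [].
have e1 : G (w - N%:R) = G w - N%:R.
  by have := lift_addn G (w - N%:R) N hG; rewrite subrK => ->; rewrite addrK.
have e2 : G (w + N%:R) = G w + N%:R by rewrite lift_addn.
have [c _ hc'] : exists2 c, c \in `[w - N%:R, w + N%:R] & G c = w.
  apply: IVT; first lra.
    exact: continuous_subspaceT.
  rewrite e1 e2; move: hN; rewrite ltr_norml => /andP[h3 h4].
  apply/andP; split; [rewrite ge_min; apply/orP; left; lra|rewrite le_max; apply/orP; right; lra].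
by exists c.
Qed.
End Lift.
Arguments lift_le {R G x y}. Arguments lift_lt {R G x y}. Arguments lift_addn {R G} x n.
Arguments lift_addz {R G} x k. Arguments lift_iter {R G} n. Arguments lift_surj {R G} w.

Section Upper.
Variable R : realType.
Notation lift := (@orient_pres_homeo_lift R).
Variables (F : R -> R) (hF : lift F) (n M : nat) (eps : R).
Hypothesis (hM : (0 < M)%N) (hMe : M%:R^-1 < eps).

Let s (k : nat) (x : R) : int := Num.floor (M%:R * iter k F x).
Let S (x : R) : int := \sum_(k < n) s k x.

Lemma s_mono k x y : x <= y -> s k x <= s k y.
Proof.
move=> hxy; apply: le_floor; apply: ler_wpM2l => //.
exact: lift_le (lift_iter k hF) hxy.
Qed.

Lemma s_shift1 k x : s k (x + 1) = s k x + M%:Z.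
Proof.
rewrite /s.
have := lift_addn x 1 (lift_iter k hF); rewrite (_ : 1%:R = 1) // => ->.
by rewrite mulrDr mulr1 floorDrz ?natr_int // -[(M%:R : R)]/((M%:Z)%:~R) intrKfloor.
Qed.

Lemma S_eq x y k : x <= y -> S x = S y -> (k < n)%N -> s k x = s k y.
Proof.
move=> hxy hS hk.
have h := @psumr_eq0P _ _ predT (fun k : 'I_n => s k y - s k x).
have := h (fun k _ => ltac:(rewrite subr_ge0; exact: s_mono hxy)).
rewrite sumrB -/(S y) -/(S x) hS subrr => /(_ erefl (Ordinal hk) erefl) /=.
by move/eqP; rewrite subr_eq0 => /eqP.
Qed.

Lemma close_of_floor a b : Num.floor (M%:R * a) = Num.floor (M%:R * b) -> `|a - b| < eps.
Proof.
move=> h.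
have /andP[h1 h2] := floor_itv (M%:R * a).
have /andP[h3 h4] := floor_itv (M%:R * b).
rewrite h intrD in h1 h2; rewrite intrD in h4.
have hM0 : (0 : R) < M%:R by rewrite ltr0n.
have hd : `|a - b| * M%:R < 1.
  rewrite -normr_nat -normrM mulrBl ltr_norml; apply/andP; split; lra.
apply: le_lt_trans hMe.
rewrite -(ler_pM2r hM0) mulVf; [lra|by rewrite pnatr_eq0 -lt0n].
Qed.

Lemma upper_cover : covers F n eps (n * M + 1).
Proof.
pose P (i : nat) := [set y : R | 0 <= y < 1 /\ S y = S 0 + i%:Z].
exists (fun i : 'I_(n * M + 1) => xget 0 (P i)) => x.
pose x' := x - (Num.floor x)%:~R.
have /andP[hx1 hx2] := floor_itv x.
have hx'0 : 0 <= x' by rewrite /x'; lra.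
have hx'1 : x' < 1 by rewrite /x' intrD in hx2 *; lra.
have hlo : S 0 <= S x' by apply: ler_sum => k _; apply: s_mono.
have hhi : S x' <= S 0 + (n * M)%:Z.
  apply: (@le_trans _ _ (\sum_(k < n) (s k 0 + M%:Z))).
    apply: ler_sum => k _; rewrite -s_shift1 add0r; apply: s_mono; exact: ltW.
  rewrite big_split /= sumr_const card_ord -/(S 0); lia.
have hi : (`|S x' - S 0| < n * M + 1)%N.
  lia.
exists (Ordinal hi); rewrite /=.
set y := xget 0 _.
have hPy : P `|S x' - S 0|%N y.
  apply: xgetPex; exists x'; split; first by apply/andP.
  rewrite gez0_abs ?subr_ge0 //; lia.
case: hPy => /andP[hy0 hy1]; rewrite gez0_abs ?subr_ge0 // => hSy.
have {}hSy : S x' = S y by lia.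
have hs : forall k, (k < n)%N -> s k x' = s k y.
  move=> k hk; case: (lerP x' y) => hxy; first by apply: S_eq.
  by symmetry; apply: S_eq => //; apply: ltW.
have he : 0 < eps by apply: lt_trans hMe; rewrite invr_gt0 ltr0n.
apply: bigmax_lt => // k _.
have -> : x = x' + (Num.floor x)%:~R by rewrite /x' subrK.
rewrite (lift_addz x' _ (lift_iter k hF)) dT_shift.
apply: le_lt_trans (dT_le_abs _ _) _.
by apply: close_of_floor; apply: hs.
Qed.
End Upper.

Section Orbit.
Variable R : realType.
Notation lift := (@orient_pres_homeo_lift R).
Variables (G : R -> R) (hG : lift G).
Hypothesis rot0 : forall e : R, 0 < e -> exists N : nat, forall m : nat,
  (N <= m)%N -> `|iter m G 0 / m%:R| < e.

Lemma orbit_inc z0 : z0 < G z0 ->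
  exists2 e : R, 0 < e & forall m, (0 < m)%N -> 2 * e <= dT (iter m G z0) z0.
Proof.
move=> hz.
pose a m := iter m G z0.
have ainc : forall m, a m < a m.+1.
  elim=> [//|m IH]; rewrite /a /=; exact: lift_lt hG IH.
have amono : {homo a : n m / (n <= m)%N >-> n <= m}.
  by apply/nondecreasing_seqP => m; apply/ltW.
have abd : forall m, a m < z0 + 1.
  move=> k; rewrite ltNge; apply/negP => hk.
  have k0 : (0 < k)%N.
    by rewrite lt0n; apply/negP => /eqP k0; move: hk; rewrite k0 /a /=; lra.
  have hj : forall j : nat, z0 + j%:R <= a (j * k)%N.
    elim=> [|j IH]; first by rewrite mul0n /a /= addr0.
    rewrite mulSn /a iterD -/(a (j * k)%N).
    apply: le_trans (lift_le (lift_iter k hG) IH).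
    rewrite (lift_addn z0 j (lift_iter k hG)) -/(a k) -natr1; lra.
  pose c : int := Num.floor z0 + 1.
  have /andP[hc1 hc2] := floor_itv z0.
  have hc : forall j : nat, (j%:R : R) - 1 <= iter (j * k) G 0.
    move=> j.
    have h1 := lift_le (lift_iter (j * k) hG) (ltW hc2).
    have h2 := lift_addz 0 (Num.floor z0 + 1) (lift_iter (j * k) hG).
    rewrite add0r in h2; rewrite h2 in h1.
    have := hj j; rewrite /a => h3.
    rewrite intrD in hc1 hc2 h1; lra.
  have ek : (0 : R) < (2 * k%:R)^-1 by rewrite invr_gt0 mulr_gt0 // ltr0n.
  have [N hN] := rot0 _ ek.
  have hm : (N <= (N + 2) * k)%N by rewrite mulnDl; nia.
  have := hN _ hm; move/(le_lt_trans (ler_norm _)).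
  have hm0 : (0 : R) < ((N + 2) * k)%:R by rewrite ltr0n muln_gt0 addn2 /=.
  rewrite ltr_pdivrMr // => hlt.
  have := hc (N + 2)%N.
  have hk0 : (0 : R) < k%:R by rewrite ltr0n.
  have E : (2 * k%:R)^-1 * ((N + 2) * k)%:R = (N + 2)%:R / 2 :> R.
    rewrite natrM; field; rewrite lt0r_neq0 //.
  have w2 : (2 : R) <= (N + 2)%:R by rewrite ler_nat leq_addl.
  rewrite E in hlt; move: hlt w2; lra.
have hub : has_ubound (range a).
  by exists (z0 + 1) => _ [m _ <-]; apply/ltW.
have ha := nondecreasing_cvgn amono hub.
set Lm := sup (range a) in ha.
have aLm : forall m, a m <= Lm by move=> m; apply: ub_le_sup => //; exists m.
have Lmle : Lm <= z0 + 1.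
  by apply: ge_sup; [exists (a 0); exists 0|move=> _ [m _ <-]; apply/ltW].
have GLm : G Lm = Lm.
  have h1 : (fun m => a m.+1) @ \oo --> Lm by rewrite (cvg_shiftS a).
  have h2 : (fun m => a m.+1) @ \oo --> G Lm.
    have hc : continuous G by case: hG.
    exact: (cvg_comp _ _ ha (hc Lm)).
  exact: (cvg_unique _ h2 h1).
have Lmlt : Lm < z0 + 1.
  rewrite lt_neqAle Lmle andbT; apply/eqP => hL.
  move: GLm; rewrite hL; have [_ [_ ->]] := hG; lra.
pose e := Num.min (G z0 - z0) (z0 + 1 - Lm) / 2.
have e1 : 2 * e <= G z0 - z0 by rewrite /e mulrC divfK // ge_min lexx.
have e2 : 2 * e <= z0 + 1 - Lm by rewrite /e mulrC divfK // ge_min lexx orbT.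
have e0 : 0 < e by rewrite /e divr_gt0 // lt_min; apply/andP; split; lra.
exists e => // m m0.
apply: dT_lb; first exact: ltW.
have := aLm m; have := amono 1%N m m0; rewrite /a /= => h1 h2.
apply/andP; split; lra.
Qed.
End Orbit.

Lemma dT_neg (R : realType) (x y : R) : dT (- x) (- y) = dT x y.
Proof.
apply/le_anti/andP; split.
  have [k ->] := dT_ex x y; apply: le_trans (dT_le _ _ (- k)) _.
  by rewrite -normrN mulrNz; apply: eqle; congr `|_|; ring.
have [k ->] := dT_ex (- x) (- y); apply: le_trans (dT_le x y (- k)) _.
by rewrite -normrN mulrNz; apply: eqle; congr `|_|; ring.
Qed.

Lemma orbit_sep (R : realType) (G : R -> R) : orient_pres_homeo_lift G ->
  (forall e : R, 0 < e -> exists N : nat, forall m : nat,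
     (N <= m)%N -> `|iter m G 0 / m%:R| < e) ->
  forall z0, G z0 != z0 ->
  exists2 e : R, 0 < e & forall m, (0 < m)%N -> 2 * e <= dT (iter m G z0) z0.
Proof.
move=> hG rot0 z0; rewrite neq_lt => /orP[hlt|hgt]; last exact: orbit_inc.
pose G' := fun x => - G (- x).
have [hc [hm hp]] := hG.
have hG' : orient_pres_homeo_lift G'.
  split; [|split].
  - move=> x; apply: continuousN.
    apply: (@continuous_comp _ _ _ (fun x => - x) G); first exact: oppr_continuous.
    exact: hc.
  - by move=> x y hxy; rewrite /G' ltrN2; apply: hm; rewrite ltrN2.
  - move=> x; rewrite /G' opprD.
    have := lift_addz (- x) (-1) hG; rewrite (_ : (-1)%:~R = -1) // => ->.
    by rewrite opprD opprK.
have hit : forall m x, iter m G' x = - iter m G (- x).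
  elim=> [|m IH] x /=; first by rewrite opprK.
  by rewrite IH /G' opprK.
have rot0' : forall e : R, 0 < e -> exists N : nat, forall m : nat,
     (N <= m)%N -> `|iter m G' 0 / m%:R| < e.
  move=> e he; have [N hN] := rot0 e he; exists N => m hmN.
  by rewrite hit oppr0 mulNr normrN; apply: hN.
have hz' : - z0 < G' (- z0) by rewrite /G' opprK ltrN2.
have [e e0 he] := orbit_inc _ _ hG' rot0' _ hz'.
exists e => // m m0; have := he m m0.
by rewrite hit opprK dT_neg.
Qed.

Section Lower.
Variable R : realType.
Notation lift := (@orient_pres_homeo_lift R).
Variables (F : R -> R) (hF : lift F) (q : nat) (p : int).
Hypothesis hq : (0 < q)%N.
Let g := fun x => iter q F x - p%:~R.

Lemma g_lift : lift g.
Proof.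
have [hc [hm hp]] := lift_iter q hF.
split; [|split].
- move=> x; apply: (@continuousB _ _ _ (iter q F) (fun=> p%:~R)); first exact: hc.
  exact: cst_continuous.
- by move=> x y hxy; rewrite /g ltrD2r; apply: hm.
- by move=> x; rewrite /g hp addrAC.
Qed.

Lemma iter_g m x : iter (m * q) F x = iter m g x + (p * m%:Z)%:~R.
Proof.
elim: m x => [|m IH] x; first by rewrite mul0n /= mulr0 addr0.
rewrite mulSn iterD IH (lift_addz _ _ (lift_iter q hF)) /= /g.
rewrite !intrM -addn1 PoszD intrD; ring.
Qed.

Lemma lower_cover (z0 e eps : R) (n m : nat) : (0 < n)%N -> 0 < eps -> eps <= e ->
  (forall d, (0 < d)%N -> 2 * e <= dT (iter d g z0) z0) ->
  covers F n eps m -> (((n.-1) %/ q).+1 <= m)%N.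
Proof.
move=> hn heps hee hsep [c hc].
set K := (n.-1 %/ q)%N.
have hy : forall j : nat, exists y, iter j g y = z0.
  by move=> j; apply: lift_surj; apply: lift_iter; apply: g_lift.
pose y (j : nat) := xget 0 [set y | iter j g y = z0].
have hyj : forall j, iter j g (y j) = z0 by move=> j; apply: (xgetPex 0 (hy j)).
have [idx hidx] := choice (fun j : 'I_K.+1 => hc (y j)).
suff : injective idx by move/leq_card; rewrite !card_ord.
have key : forall j1 j2 : 'I_K.+1, (j1 < j2)%N -> idx j1 = idx j2 -> False.
  move=> j1 j2 hlt heq.
  have h1 := hidx j1; have h2 := hidx j2; rewrite heq in h1.
  have hk : (j2 * q < n)%N.
    have := ltn_ord j2; rewrite ltnS leq_divRL // => h.
    by apply: leq_ltn_trans h _; rewrite ltn_predL.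
  have b1 := le_lt_trans (le_bigmax _ (fun k : 'I_n => dT (iter k F (y j1)) (iter k F (c (idx j2)))) (Ordinal hk)) h1.
  have b2 := le_lt_trans (le_bigmax _ (fun k : 'I_n => dT (iter k F (y j2)) (iter k F (c (idx j2)))) (Ordinal hk)) h2.
  rewrite /= !iter_g hyj in b1 b2.
  have e1 : iter j2 g (y j1) = iter (j2 - j1) g z0.
    by rewrite -(hyj j1) -iterD subnK // ltnW.
  rewrite e1 in b1.
  have := dT_triangle (iter (j2 - j1) g z0 + (p * j2%:Z)%:~R) (iter j2 g (c (idx j2)) + (p * j2%:Z)%:~R)
     (z0 + (p * j2%:Z)%:~R).
  rewrite (dT_sym (iter j2 g (c (idx j2)) + _)) (dT_shiftr (iter (j2 - j1) g z0 + _) z0) (dT_shift (iter (j2 - j1) g z0) z0).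
  have := hsep (j2 - j1)%N; rewrite subn_gt0 => /(_ hlt) => hs.
  lra.
move=> j1 j2 heq; case: (ltngtP j1 j2) => hlt.
- by exfalso; apply: (key _ _ hlt heq).
- by exfalso; apply: (key _ _ hlt (esym heq)).
- exact: val_inj.
Qed.
End Lower.

Section Conj.
Variable R : realType.
Notation lift := (@orient_pres_homeo_lift R).

Lemma sum_iter_cont (F : R -> R) (hF : lift F) (q : nat) :
  continuous (fun x => \sum_(i < q) iter i F x).
Proof.
elim: q => [|q IH].
  have -> : (fun x => \sum_(i < 0) iter i F x) = fun=> 0.
    by apply: funext => y; rewrite big_ord0.
  move=> x; exact: cst_continuous.
have -> : (fun x => \sum_(i < q.+1) iter i F x) = (fun x => \sum_(i < q) iter i F x) + iter q F.
  by apply: funext => y; rewrite big_ord_recr.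
move=> x; apply: continuousD; first exact: IH.
by have [hc _] := lift_iter q hF; exact: hc.
Qed.

Lemma sum_iter_lt (F : R -> R) (hF : lift F) (q : nat) x y : (0 < q)%N -> x < y ->
  \sum_(i < q) iter i F x < \sum_(i < q) iter i F y.
Proof.
case: q => // q _ hxy; rewrite !big_ord_recl /=.
apply: ltr_leD => //; apply: ler_sum => i _.
exact: lift_le (lift_iter i.+1 hF) (ltW hxy).
Qed.

Lemma conj_of_periodic (F : R -> R) (hF : lift F) (q : nat) (p : int) :
  (0 < q)%N -> (forall x, iter q F x - p%:~R = x) -> conj_to_rotation F.
Proof.
move=> hq hper.
pose S x := \sum_(i < q) iter i F x.
have hq0 : (0 : R) < q%:R by rewrite ltr0n.
exists (fun x => S x / q%:R), (p%:~R / q%:R); split; [split; [|split]|].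
- move=> x; apply: (@continuousM _ _ S (fun=> q%:R^-1)); first exact: sum_iter_cont.
  exact: cst_continuous.
- move=> x y hxy.
  have hS : S x = S y.
    by have := congr1 (fun t => t * q%:R) hxy; rewrite /= !divfK // lt0r_neq0.
  case: (ltgtP x y) => // h.
    by have := sum_iter_lt _ hF _ _ _ hq h; rewrite -/(S x) -/(S y) hS ltxx.
  by have := sum_iter_lt _ hF _ _ _ hq h; rewrite -/(S x) -/(S y) hS ltxx.
- left => x; rewrite /S.
  have h1 : forall i, iter i F (x + 1) = iter i F x + 1.
    by move=> i; have := lift_addn x 1 (lift_iter i hF).
  rewrite (eq_bigr (fun i : 'I_q => iter i F x + 1)); last by move=> i _; exact: h1.
  rewrite big_split /= sumr_const card_ord mulrDl divff ?lt0r_neq0 //.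
- move=> x; exists 0; rewrite addr0.
  have e : S (F x) = S x + p%:~R.
    have h1 : \sum_(i < q.+1) iter i F x = S x + iter q F x by rewrite big_ord_recr /=.
    have h2 : \sum_(i < q.+1) iter i F x = x + S (F x).
      by rewrite big_ord_recl /=; congr (_ + _); apply: eq_bigr => i _; rewrite add0n -iterS iterSr.
    have := hper x; lra.
  by rewrite e mulrDl.
Qed.
End Conj.

Lemma limsup_one (R : realType) (G : nat -> R) (a b : R) : 0 < a -> 0 < b ->
  (forall n, (1 <= n)%N -> n%:R * a <= G n <= n%:R * b) ->
  limn_esup (fun n => (ln (G n) / ln n%:R)%:E) = 1%:E.
Proof.
move=> ha hb hG.
pose x n := ln (G n) / ln (n%:R : R).
have hx : x @ \oo --> (1 : R).
  apply/cvgrPdist_lt => e he.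
  pose C := `|ln a| + `|ln b|.
  near=> n.
  have hn2 : (2 <= n)%N by near: n; exact: nbhs_infty_ge.
  have hnE : expR (C / e) < n%:R by near: n; exact: nbhs_infty_gtr.
  have hn0 : (0 : R) < n%:R by rewrite ltr0n; apply: leq_trans hn2.
  have ln0 : 0 < ln (n%:R : R) by apply: ln_gt0; rewrite ltr1n.
  have lnC : C / e < ln (n%:R : R).
    by rewrite -(ltr_ln (expR_gt0 _)) ?posrE // expRK in hnE.
  rewrite ltr_pdivrMr // in lnC.
  have /andP[g1 g2] := hG n (ltnW hn2).
  have hna : 0 < n%:R * a by rewrite mulr_gt0.
  have l1 := ler_ln (x:=n%:R * a) (y:=G n); rewrite !posrE hna (lt_le_trans hna g1) in l1.
  have l2 := ler_ln (x:=G n) (y:=n%:R * b); rewrite !posrE mulr_gt0 // (lt_le_trans hna g1) in l2.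
  rewrite -l1 // in g1; rewrite -l2 // in g2.
  rewrite !lnM ?posrE // in g1 g2.
  have ha' := ler_norm (ln a); have ha'' := ler_normr (ln a).
  have hb' := ler_norm (ln b); have hb'' := ler_normr (ln b).
  have e1 : 1 - x n = (ln (n%:R : R) - ln (G n)) / ln (n%:R : R).
    by rewrite /x; field; rewrite lt0r_neq0.
  rewrite e1 normrM (ger0_norm (x := (ln (n%:R : R))^-1)) ?invr_ge0 ?ltW // ltr_pdivrMr //.
  have hna2 : - ln a <= `|ln a| by rewrite -normrN ler_norm.
  have hnb2 : - ln b <= `|ln b| by rewrite -normrN ler_norm.
  have ha0 : 0 <= `|ln a| by [].
  have hb0 : 0 <= `|ln b| by [].
  rewrite /C in lnC.
  rewrite ltr_norml; apply/andP; split; lra.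
have hE : (fun n => (x n)%:E) @ \oo --> (1%:E : \bar R).
  by apply: cvg_EFin; [near=> n | exact: hx].
rewrite is_cvg_limn_esupE; last exact: (cvgP _ hE).
exact: cvg_lim hE.
Unshelve. all: by end_near.
Qed.

Theorem proposition3p1 (R : realType) (F : R -> R) :
  orient_pres_homeo_lift F ->
  rational_rotation_number F ->
  ~ conj_to_rotation F ->
  hpol_eps F eps @[eps --> 0^'+] --> 1%:E.
Proof.
move=> hF [r hr] hnc.
pose q := `|denq r|%N.
have hq : (0 < q)%N by rewrite /q absz_gt0 denq_neq0.
have hq0 : (0 : R) < q%:R by rewrite ltr0n.
pose p := numq r.
have hd : ((denq r)%:~R : R) = q%:R by rewrite /q pmulrn absz_denq.
have rr : (ratr r : R) = p%:~R / q%:R by rewrite /ratr hd.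
pose g := fun x => iter q F x - p%:~R.
have rot0 : forall e : R, 0 < e -> exists N : nat, forall m : nat,
    (N <= m)%N -> `|iter m g 0 / m%:R| < e.
  move=> e he.
  have he' : 0 < e / q%:R by rewrite divr_gt0.
  have := hr; move/cvgrPdist_lt => /(_ _ he') [N _ hN].
  exists (maxn N 1) => m hm.
  have hm1 : (0 < m)%N by apply: leq_trans hm; rewrite leq_maxr.
  have hmN : (N <= m * q)%N.
    by apply: leq_trans (leq_pmulr _ hq); apply: leq_trans hm; rewrite leq_maxl.
  have := hN _ hmN; rewrite /= (iter_g _ _ hF q p) -/g => h.
  have hm0 : (0 : R) < m%:R by rewrite ltr0n.
  have eq : iter m g 0 / m%:R = - (q%:R * (ratr r - (iter m g 0 + (p * m%:Z)%:~R) / (m * q)%:R)).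
    rewrite rr natrM intrM; field; apply/andP; split; exact: lt0r_neq0.
  rewrite eq normrN normrM (ger0_norm (ltW hq0)) mulrC -ltr_pdivlMr //.
have hz : exists z0, g z0 != z0.
  have : ~ (forall x, g x = x).
    by move=> h; apply: hnc; apply: (conj_of_periodic _ _ hF _ _ hq) => x; exact: h x.
  by move/existsNP => [z0 hz0]; exists z0; apply/eqP.
have [z0 hz0] := hz.
have [e0 he0 hsep] := orbit_sep _ _ (g_lift _ _ hF q p) rot0 _ hz0.
have key : forall eps : R, 0 < eps -> eps <= e0 -> hpol_eps F eps = 1%:E.
  move=> eps he hee.
  pose M := (Num.trunc eps^-1).+1.
  have hM : (0 < M)%N by [].
  have hMe : M%:R^-1 < eps.
    rewrite -(invrK eps) ltf_pV2 ?posrE ?invr_gt0 ?ltr0n //; exact: truncnS_gt.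
  apply: (limsup_one _ _ (q%:R^-1) (M + 1)%:R); first by rewrite invr_gt0.
    by rewrite ltr0n addn1.
  move=> n hn.
  have cov := upper_cover _ _ hF n _ _ hM hMe.
  have hne : [set (m%:R : R) | m in covers F n eps] !=set0.
    by exists (n * M + 1)%:R; exists (n * M + 1)%N.
  apply/andP; split.
    apply: lb_le_inf => // _ [m hm <-].
    have := lower_cover _ _ hF _ _ hq _ _ _ _ _ hn he hee hsep hm.
    set K := (n.-1 %/ q)%N => hK.
    have hnK : (n <= K.+1 * q)%N.
      by have := ltn_ceil n.-1 hq; rewrite -/K prednK.
    apply: (@le_trans _ _ (K.+1)%:R); last by rewrite ler_nat.
    by rewrite ler_pdivrMr // -natrM ler_nat.
  apply: (@le_trans _ _ (n * M + 1)%:R).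
    apply: ge_inf; last by exists (n * M + 1)%N.
    by exists 0 => _ [m _ <-].
  by rewrite -natrM ler_nat mulnDr muln1 leq_add2l.
apply: cvg_near_cst; near=> eps; apply: key.
  by near: eps; exact: nbhs_right_gt.
by near: eps; exact: nbhs_right_ltW.
Unshelve. all: by end_near.
Qed.
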